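(* Let $p$ be a prime, $m$ a positive integer, $q=p^m$, and $q-1=3s$ with $s$ a positive integer. Let $\gamma$ be a primitive element of $\mathbb{F}_q$ and $\xi=\gamma^s$ (so $\xi^3=1$, $\xi$ a primitive cube root of unity). Let $r$ be a positive integer and $f\in\mathbb{F}_q[x]$ with $f(x)\equiv ax^2+bx+c\pmod{x^3-1}$ for some $a,b,c\in\mathbb{F}_q$ satisfying $a^2+b^2+c^2-ab-bc-ca=1$. Let $A_i=f(\xi^i)$ for $i=0,1,2$ and $P(x)=x^rf(x^s)$. Then $P(x)$ is a permutation polynomial of $\mathbb{F}_q$ if and only if $\gcd(r,s)=1$, $A_i\neq0$ for $i=0,1,2$, $A_0^s=1$, $3\mid\mathrm{Ind}_\gamma(A_0)$, and $3\nmid r+\mathrm{Ind}_\gamma(A_2^2)$.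
   Context: A permutation polynomial of $\mathbb{F}_q$ is one inducing a bijection of $\mathbb{F}_q$. For nonzero $a\in\mathbb{F}_q$, $\mathrm{Ind}_\gamma(a)$ is the residue class $b\bmod(q-1)$ with $a=\gamma^b$; divisibility by $3$ is well defined since $3\mid q-1$. *)

(* Defs.v *)
From HB Require Import structures.
From mathcomp Require Import all_boot all_order all_algebra all_field.
Set Implicit Arguments. Unset Strict Implicit. Unset Printing Implicit Defensive.
Import GRing.Theory.
Local Open Scope ring_scope.

Definition perm_poly (F : finFieldType) (P : {poly F}) : Prop :=
  bijective (fun x : F => P.[x]).

Definition primitive_elt (F : finFieldType) (g : F) : bool :=
  (#|F|.-1).-primitive_root g.

(* Index (discrete logarithm) of a w.r.t. g: the least k in [0, q-1) with
   g^k = a; this is the canonical representative of Ind_g(a) mod (q-1)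
   whenever a is nonzero and g is primitive. *)
Definition Ind (F : finFieldType) (g a : F) : nat :=
  find (fun k => g ^+ k == a) (iota 0 #|F|.-1).

(* Main.v *)
Require Import Defs.
From HB Require Import structures.
From mathcomp Require Import all_boot all_order all_algebra all_field.
From mathcomp Require Import zify ring.
Import GRing.Theory.
Local Open Scope ring_scope.

Lemma mod_down (s i j : nat) : (i == j %[mod 3 * s])%N -> (i == j %[mod 3])%N.
Proof.
move/eqP=> h; apply/eqP.
have := congr1 (modn^~ 3%N) h; rewrite /= !modn_dvdm //; exact: dvdn_mulr.
Qed.

Lemma ind_spec (F : finFieldType) (g x : F) :
  (#|F|.-1).-primitive_root g -> x != 0 -> g ^+ Ind g x = x.
Proof.
move=> gp x0.
have cF : #|F| = (#|F|.-1).+1.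
  by rewrite prednK // (cardD1 (0 : F)).
have xn : x ^+ (#|F|.-1) = 1.
  apply: (mulIf x0); rewrite mul1r -exprSr -cF; exact: expf_card.
have [i ->] := prim_rootP gp xn.
rewrite /Ind.
set pr := (fun k : nat => _).
have hh : has pr (iota 0 #|F|.-1).
  apply/hasP; exists (val i); first by rewrite mem_iota /= add0n ltn_ord.
  by rewrite /pr.
have := nth_find 0%N hh; rewrite /pr nth_iota ?add0n; first by move/eqP.
by move: hh; rewrite has_find size_iota.
Qed.

Lemma eq_rs (F : fieldType) (x y : F) (r s : nat) :
  (0 < r)%N -> coprime r s -> x != 0 -> x ^+ r = y ^+ r -> x ^+ s = y ^+ s -> x = y.
Proof.
move=> r0 co x0 hr hs.
have [u _] := Bezoutl s r0.
rewrite (eqP co) => /dvdnP [k hk].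
have xs0 : (x ^+ s) ^+ u != 0 by rewrite !expf_neq0.
apply: (mulIf xs0).
have e : ((s * u).+1 = r * k)%N by rewrite mulnC [(r * k)%N]mulnC -hk add1n.
have e1 : x * (x ^+ s) ^+ u = (x ^+ r) ^+ k by rewrite -!exprM -exprS e.
have e2 : y * (y ^+ s) ^+ u = (y ^+ r) ^+ k by rewrite -!exprM -exprS e.
by rewrite e1 hs e2 hr.
Qed.

Lemma fin3 (x0 x1 x2 y : nat) : (x0 < 3 -> x1 < 3 -> x2 < 3 -> (x1 + x2) %% 3 = 0 -> y = (2 * x2) %% 3 ->
  ((x0 == 0) && (y != 0)) = [&& x0 != x1, x0 != x2 & x1 != x2])%N.
Proof.
move=> h0 h1 h2 h12 ->.
by move: x0 x1 x2 h0 h1 h2 h12 => [|[|[|x0]]] [|[|[|x1]]] [|[|[|x2]]].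
Qed.
Lemma fin3s (x0 x1 x2 : nat) : (x0 < 3 -> x1 < 3 -> x2 < 3 ->
  (forall j, j < 3 -> [|| x0 == j, x1 == j | x2 == j]) -> [&& x0 != x1, x0 != x2 & x1 != x2])%N.
Proof.
move=> h0 h1 h2 H; move: (H 0 isT) (H 1 isT) (H 2 isT); clear H.
by move: x0 x1 x2 h0 h1 h2 => [|[|[|x0]]] [|[|[|x1]]] [|[|[|x2]]].
Qed.
Lemma F1 (r I1 I2 : nat) : ((I1 + I2) %% 3 = 0 -> ((r + I1) %% 3 + (2 * r + I2) %% 3) %% 3 = 0)%N.
Proof. lia. Qed.
Lemma F2 (r I2 v : nat) : (v %% 3 = (2 * I2) %% 3 -> (r + v) %% 3 = (2 * ((2 * r + I2) %% 3)) %% 3)%N.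
Proof. lia. Qed.

Lemma modfix (r k X : nat) : ((k %% 3 * r + X) %% 3 = (k * r + X) %% 3)%N.
Proof. by rewrite -modnDml modnMml modnDml. Qed.

Theorem theorem3p4 (F : finFieldType) (p m s r : nat) (g : F) (f : {poly F})
    (a b c : F) :
  prime p -> (0 < m)%N -> #|F| = (p ^ m)%N ->
  (0 < s)%N -> #|F|.-1 = (3 * s)%N ->
  primitive_elt g ->
  (0 < r)%N ->
  f %% ('X^3 - 1) = a *: 'X^2 + b *: 'X + c%:P ->
  a ^+ 2 + b ^+ 2 + c ^+ 2 - a * b - b * c - c * a = 1 ->
  let xi := g ^+ s in
  let A := fun i : nat => f.[xi ^+ i] in
  let P := 'X^r * (f \Po 'X^s) in
  perm_poly P <->
  [/\ coprime r s,
      (forall i : nat, (i < 3)%N -> A i != 0),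
      A 0%N ^+ s = 1,
      (3 %| Ind g (A 0%N))%N
    & ~~ (3 %| r + Ind g (A 2%N ^+ 2))%N].
Proof.
move=> _ _ _ s0 cardn gp0 r0 fmod habc xi A P.
have gp1 : (#|F|.-1).-primitive_root g := gp0.
have gp : (3 * s).-primitive_root g by rewrite -cardn.
have indP x : x != 0 -> g ^+ Ind g x = x by apply: ind_spec.
have g0 : g != 0.
  apply/eqP=> g0; have := prim_expr_order gp; rewrite g0 expr0n muln_eq0 /=.
  by rewrite (negbTE (lt0n_neq0 s0)) => /eqP; rewrite eq_sym oner_eq0.
have gE i j : (g ^+ i == g ^+ j) = (i == j %[mod 3 * s])%N := eq_prim_root_expr gp i j.
have xiE i j : (xi ^+ i == xi ^+ j) = (i == j %[mod 3])%N.
  rewrite /xi -!exprM gE [(3 * s)%N]mulnC -!muln_modr.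
  by rewrite eqn_pmul2l.
have xim i : xi ^+ i = xi ^+ (i %% 3).
  by apply/eqP; rewrite xiE modn_mod.
have Am i : A i = A (i %% 3)%N by congr (horner f); apply: xim.
have xi3 : xi ^+ 3 = 1 by rewrite xim modnn.
have fev y : y ^+ 3 = 1 -> f.[y] = a * y ^+ 2 + b * y + c.
  move=> y3; rewrite (divp_eq f ('X^3 - 1)) hornerD hornerM fmod.
  rewrite !(hornerD, hornerN, hornerZ, hornerXn, hornerX, hornerC) y3 subrr mulr0 add0r.
  by [].
have xi1 : xi != 1 by rewrite -(expr0 xi) -[xi]expr1 xiE.
have hcyc : xi ^+ 2 + xi + 1 = 0.
  have : (xi - 1) * (xi ^+ 2 + xi + 1) = xi ^+ 3 - 1 by ring.
  rewrite xi3 subrr => /eqP; rewrite mulf_eq0 subr_eq0 (negbTE xi1) /=.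
  by move/eqP.
have A1E : A 1%N = a * xi ^+ 2 + b * xi + c by rewrite /A expr1 fev.
have xi4 : (xi ^+ 2) ^+ 2 = xi by rewrite -exprM xim.
have A2E : A 2%N = a * xi + b * xi ^+ 2 + c.
  by rewrite /A fev ?xi4 // -exprM mulnC exprM xi3 expr1n.
have A12 : A 1%N * A 2%N = 1.
  have key : A 1%N * A 2%N - (a ^+ 2 + b ^+ 2 + c ^+ 2 - a * b - b * c - c * a)
     = (xi ^+ 3 - 1) * (a ^+ 2 + b ^+ 2 + a * b * xi)
       + (xi ^+ 2 + xi + 1) * (a * b + b * c + c * a).
  by rewrite A1E A2E; ring.
  move/eqP: key; rewrite xi3 hcyc subrr !mul0r addr0 subr_eq0 habc.
  by move/eqP.
have A10 : A 1%N != 0 by apply/eqP=> h0; move: A12; rewrite h0 mul0r => /eqP; rewrite eq_sym oner_eq0.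
have A20 : A 2%N != 0 by apply/eqP=> h0; move: A12; rewrite h0 mulr0 => /eqP; rewrite eq_sym oner_eq0.
have gs k : (g ^+ k) ^+ s = xi ^+ k by rewrite -exprM mulnC exprM.
have Pev x : P.[x] = x ^+ r * f.[x ^+ s].
  by rewrite /P hornerM hornerXn horner_comp hornerXn.
have P0 : P.[0] = 0 by rewrite Pev expr0n (negbTE (lt0n_neq0 r0)) mul0r.
have Pg k : P.[g ^+ k] = g ^+ (k * r) * A (k %% 3)%N.
  by rewrite Pev gs -Am exprM.
have Pnz x : (forall i, (i < 3)%N -> A i != 0) -> x != 0 -> P.[x] != 0.
  move=> hA x0; rewrite -(indP _ x0) Pg mulf_neq0 ?expf_neq0 //.
  by apply: hA; rewrite ltn_pmod.
have hPs k : A (k %% 3)%N != 0 -> P.[g ^+ k] ^+ s = xi ^+ (k * r + Ind g (A (k %% 3)%N)).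
  move=> h; rewrite Pg exprMn; set I := Ind g _.
  have hI : g ^+ I = A (k %% 3)%N by apply: indP.
  rewrite -hI -(exprM g) -(exprM g) /xi -exprM -exprD.
  by congr (g ^+ _); ring.
have hu : ((Ind g (A 1%N) + Ind g (A 2%N)) %% 3 = 0)%N.
  have : g ^+ (Ind g (A 1%N) + Ind g (A 2%N)) == g ^+ 0.
    by rewrite exprD !indP // A12 expr0.
  by rewrite gE => /mod_down /eqP; rewrite mod0n.
have hv : (Ind g (A 2%N ^+ 2) %% 3 = (2 * Ind g (A 2%N)) %% 3)%N.
  have : g ^+ (Ind g (A 2%N ^+ 2)) == g ^+ (2 * Ind g (A 2%N)).
    by rewrite indP ?expf_neq0 // mulnC exprM indP.
  by rewrite gE => /mod_down /eqP.
have hA0 : A 0%N != 0 -> (A 0%N ^+ s == 1) = (3 %| Ind g (A 0%N))%N.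
  move=> h; rewrite -{1}(indP _ h) gs -(expr0 xi) xiE mod0n.
  by [].
have dec x : x != 0 -> exists k, x = g ^+ k.
  by move=> x0; exists (Ind g x); rewrite indP.
split.
- move=> [h hK hKV].
  have inj : injective (fun x => P.[x]) := can_inj hK.
  have hA : forall i, (i < 3)%N -> A i != 0.
    move=> i hi; apply/negP=> /eqP Ai0.
    have : P.[g ^+ i] = P.[0] by rewrite Pg (modn_small hi) Ai0 mulr0 P0.
    by move/inj/eqP; rewrite expf_eq0 (negbTE g0) andbF.
  have hco : coprime r s.
    rewrite /coprime; apply/negP => /negP dn1.
    set d := gcdn r s.
    have d0 : (0 < d)%N by rewrite gcdn_gt0 s0 orbT.
    have d1 : (1 < d)%N.
      by move: d0 dn1; rewrite /d; lia.
    have [r' hr'] : exists r', r = (r' * d)%N by apply/dvdnP; apply: dvdn_gcdl.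
    have [s' hs'] : exists s', s = (s' * d)%N by apply/dvdnP; apply: dvdn_gcdr.
    set z := g ^+ (3 * s').
    have zr : z ^+ r = 1.
      have e : (3 * s' * r = 3 * s * r')%N by rewrite hr' hs'; ring.
      by rewrite /z -exprM e exprM (prim_expr_order gp) expr1n.
    have zs : z ^+ s = 1.
      have e : (3 * s' * s = 3 * s * s')%N by rewrite hs'; ring.
      by rewrite /z -exprM e exprM (prim_expr_order gp) expr1n.
    have : P.[z] = P.[1] by rewrite !Pev zr zs !expr1n.
    move/inj/eqP; rewrite /z -(expr0 g) gE mod0n.
    have s'0 : (0 < s')%N by move: s0; rewrite hs' muln_gt0 => /andP [].
    rewrite [in (_ %% (3 * s))%N]hs' modn_small.
      by move: s'0; lia.
    by rewrite ltn_pmul2l // ltn_Pmulr.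
  have surj : forall j, (j < 3)%N -> exists2 i, (i < 3)%N & ((i * r + Ind g (A i)) %% 3 = j)%N.
    move=> j hj; set y := g ^+ j.
    have hx : P.[h y] = y by rewrite hKV.
    have x0 : h y != 0.
      apply/eqP=> e; move: hx; rewrite e P0 /y => /eqP; rewrite eq_sym expf_eq0 (negbTE g0) andbF.
      by [].
    have [k hk] := dec _ x0.
    have hk3 : (k %% 3 < 3)%N by rewrite ltn_pmod.
    have : P.[g ^+ k] ^+ s = y ^+ s by rewrite -hk hx.
    rewrite hPs ?hA // /y gs => /eqP; rewrite xiE (modn_small hj) => /eqP e.
    exists (k %% 3)%N => //.
    by rewrite -e -modnDml modnMml modnDml.
  have Sj : forall j, (j < 3)%N -> [|| (Ind g (A 0%N) %% 3 == j)%N, ((r + Ind g (A 1%N)) %% 3 == j)%N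
                          | ((2 * r + Ind g (A 2%N)) %% 3 == j)%N].
    move=> j hj; have [i hi e] := surj j hj; move: hi e.
    case: i => [|[|[|i]]] // _ <-.
    - by rewrite mul0n add0n eqxx.
    - by rewrite mul1n eqxx orbT.
    - by rewrite eqxx !orbT.
  have D := fin3s _ _ _ (ltn_pmod _ (isT : (0 < 3)%N)) (ltn_pmod _ (isT : (0 < 3)%N)) (ltn_pmod _ (isT : (0 < 3)%N)) Sj.
  have := fin3 _ _ _ _ (ltn_pmod (Ind g (A 0%N)) (isT : (0 < 3)%N)) (ltn_pmod _ (isT : (0 < 3)%N)) (ltn_pmod _ (isT : (0 < 3)%N)) (F1 r _ _ hu) (F2 r _ _ hv).
  rewrite D => /andP [h3 hn].
  split => //.
  by apply/eqP; rewrite hA0 ?hA.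
- move=> [hco hA hA0s h3 hn].
  have D : [&& (Ind g (A 0%N) %% 3 != (r + Ind g (A 1%N)) %% 3)%N,
              (Ind g (A 0%N) %% 3 != (2 * r + Ind g (A 2%N)) %% 3)%N
            & ((r + Ind g (A 1%N)) %% 3 != (2 * r + Ind g (A 2%N)) %% 3)%N].
    rewrite -(fin3 _ _ _ _ (ltn_pmod (Ind g (A 0%N)) (isT : (0 < 3)%N)) (ltn_pmod _ (isT : (0 < 3)%N)) (ltn_pmod _ (isT : (0 < 3)%N)) (F1 r _ _ hu) (F2 r _ _ hv)).
    by apply/andP; split.
  have dist : forall i j, (i < 3)%N -> (j < 3)%N ->
      ((i * r + Ind g (A i)) %% 3 = (j * r + Ind g (A j)) %% 3)%N -> i = j.
    move: D => /and3P [d01 d02 d12].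
    move=> i j; case: i => [|[|[|i]]] //; case: j => [|[|[|j]]] // _ _;
      rewrite ?mul0n ?add0n ?mul1n => e //; move: d01 d02 d12; rewrite e eqxx //= ?andbF.
  apply: injF_bij => x y /= hxy.
  case x0: (x == 0); case y0: (y == 0).
  + by rewrite (eqP x0) (eqP y0).
  + move: hxy; rewrite (eqP x0) P0 => hxy.
    by have := Pnz y hA (negbT y0); rewrite -hxy eqxx.
  + move: hxy; rewrite (eqP y0) P0 => hxy.
    by have := Pnz x hA (negbT x0); rewrite hxy eqxx.
  have [kx hx] := dec x (negbT x0); have [ky hy] := dec y (negbT y0).
  have ax : A (kx %% 3)%N != 0 by apply: hA; rewrite ltn_pmod.
  have ay : A (ky %% 3)%N != 0 by apply: hA; rewrite ltn_pmod.
  have e : (kx %% 3 = ky %% 3)%N.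
    have : P.[g ^+ kx] ^+ s = P.[g ^+ ky] ^+ s by rewrite -hx -hy hxy.
    rewrite !hPs // => /eqP; rewrite xiE => /eqP e.
    by apply: dist; rewrite ?ltn_pmod // !modfix.
  have exs : x ^+ s = y ^+ s by rewrite hx hy !gs xim e -xim.
  have fx : f.[x ^+ s] = A (kx %% 3)%N by rewrite hx gs -Am.
  have hr : x ^+ r = y ^+ r.
    move: hxy; rewrite !Pev -exs; apply: mulIf; by rewrite fx.
  exact: (eq_rs _ _ _ _ _ r0 hco (negbT x0) hr exs).
Qed.
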